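(* Let $d\ge k\ge1$, $A\in\mathbb{R}^{d\times k}$ with $A^TA=I_k$, $\beta\in(0,1)$, $\theta^*=\sqrt{1-\beta}\,AA^T$, and let $\delta\in\mathbb{R}^{d\times d}$ and $\hat\theta:=\theta^*+\sqrt{1-\beta}\,\delta$. Let $m\in\{0,1\}^d$ and assume $\hat\lambda_{\max}:=\|(AA^T+\delta)D(m)\|<1$. Let $x_0$ be in the column space of $A$ and $x_1\in\mathbb{R}^d$ arbitrary. Define $$x_0^{(0)}=AA^Tx_1,\qquad x_0^{(r)}=\tfrac{1}{\sqrt{1-\beta}}\hat\theta\big(D(m)\,x_0^{(r-1)}+D(\mathbf 1-m)\,x_0\big)\quad(r\ge1).$$ Then for every $r\ge0$, $$\|x_0^{(r)}-x_0\|\le\hat\lambda_{\max}^r\left(\frac{\|\theta^*\|\,\|x_1-x_0\|}{\sqrt{1-\beta}}+\frac{\|\hat\theta-\theta^*\|\,\|x_0\|}{(1-\hat\lambda_{\max})\sqrt{1-\beta}}\right)+\frac{\|\hat\theta-\theta^*\|\,\|x_0\|}{(1-\hat\lambda_{\max})\sqrt{1-\beta}}.$$ *)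

(* Defs.v *)
From HB Require Import structures.
From mathcomp Require Import all_boot all_order all_algebra.
From mathcomp Require Import classical_sets reals.
Set Implicit Arguments. Unset Strict Implicit. Unset Printing Implicit Defensive.
Import Order.TTheory GRing.Theory Num.Theory.
Local Open Scope ring_scope.
Local Open Scope classical_set_scope.

Definition vnorm (R : realType) (n : nat) (v : 'cV[R]_n) : R :=
  Num.sqrt (\sum_(i < n) v i 0 ^+ 2).

Definition opnorm (R : realType) (p q : nat) (M : 'M[R]_(p, q)) : R :=
  sup [set vnorm (M *m v) | v in [set v : 'cV[R]_q | vnorm v <= 1]].

Definition Dmask (R : realType) (d : nat) (m : 'I_d -> bool) : 'M[R]_d :=
  diag_mx (\row_i (m i)%:R).

Definition Dcomask (R : realType) (d : nat) (m : 'I_d -> bool) : 'M[R]_d :=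
  diag_mx (\row_i (1 - (m i)%:R)).

Definition theta_star (R : realType) (d k : nat) (A : 'M[R]_(d, k)) (beta : R)
  : 'M[R]_d := Num.sqrt (1 - beta) *: (A *m A^T).

Definition theta_hat (R : realType) (d k : nat) (A : 'M[R]_(d, k)) (beta : R)
  (delta : 'M[R]_d) : 'M[R]_d :=
  theta_star A beta + Num.sqrt (1 - beta) *: delta.

Fixpoint iterate (R : realType) (d k : nat) (A : 'M[R]_(d, k)) (beta : R)
  (delta : 'M[R]_d) (m : 'I_d -> bool) (x0 x1 : 'cV[R]_d) (r : nat) : 'cV[R]_d :=
  match r with
  | 0 => A *m A^T *m x1
  | r'.+1 => (Num.sqrt (1 - beta))^-1 *:
       (theta_hat A beta delta *m
         (Dmask R m *m iterate A beta delta m x0 x1 r' + Dcomask R m *m x0))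
  end.

(* Main.v *)
Require Import Defs.
From HB Require Import structures.
From mathcomp Require Import all_boot all_order all_algebra.
From mathcomp Require Import classical_sets reals.
From mathcomp Require Import ring lra.
Import Order.TTheory GRing.Theory Num.Theory.
Local Open Scope ring_scope.

Section V.
Local Open Scope classical_set_scope.
Context {R : realType}.
Context {n : nat}.
Implicit Types u v : 'cV[R]_n.

Definition dot u v : R := \sum_(i < n) u i 0 * v i 0.

Lemma sq_dot v : \sum_(i < n) v i 0 ^+ 2 = dot v v.
Proof. by apply: eq_bigr => i _; rewrite expr2. Qed.

Lemma dot_ge0 v : 0 <= dot v v.
Proof. by apply: sumr_ge0 => i _; rewrite -expr2 sqr_ge0. Qed.

Lemma vnormE v : vnorm v = Num.sqrt (dot v v).
Proof. by rewrite /vnorm sq_dot. Qed.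

Lemma vnorm_ge0 v : 0 <= vnorm v.
Proof. exact: sqrtr_ge0. Qed.

Lemma vnorm_sq v : vnorm v ^+ 2 = dot v v.
Proof. by rewrite vnormE sqr_sqrtr // dot_ge0. Qed.

Lemma dotC u v : dot u v = dot v u.
Proof. by apply: eq_bigr => i _; rewrite mulrC. Qed.

Lemma dot_lin (x y : R) u v :
  dot (x *: u - y *: v) (x *: u - y *: v)
  = x^+2 * dot u u - 2 * x * y * dot u v + y^+2 * dot v v.
Proof.
rewrite /dot !mulr_sumr -!sumrB -big_split /=; apply: eq_bigr => i _.
rewrite !mxE; ring.
Qed.

Lemma CS u v : dot u v ^+ 2 <= dot u u * dot v v.
Proof.
have [b0|bpos] := eqVneq (dot v v) 0.
  have h : forall i, v i 0 = 0.
    move=> i; move/eqP: b0; rewrite /dot psumr_eq0; last by move=> j _; rewrite -expr2 sqr_ge0.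
    by move/allP/(_ i (mem_index_enum _)); rewrite implyTb -expr2 sqrf_eq0 => /eqP.
  have -> : dot u v = 0 by rewrite /dot big1 // => i _; rewrite h mulr0.
  by rewrite b0 mulr0 expr0n.
have bgt : 0 < dot v v by rewrite lt0r bpos dot_ge0.
have := dot_ge0 (dot v v *: u - dot u v *: v).
rewrite dot_lin => h.
have : 0 <= dot v v * (dot u u * dot v v - dot u v ^+ 2).
  by nra.
by rewrite pmulr_rge0 // subr_ge0.
Qed.

Lemma dot_le u v : dot u v <= vnorm u * vnorm v.
Proof.
have h0 := vnorm_ge0 u; have h1 := vnorm_ge0 v.
have := CS u v; rewrite -!vnorm_sq -exprMn => h.
have : `|dot u v| <= vnorm u * vnorm v.
  by rewrite -ler_sqr ?nnegrE ?normr_ge0 ?mulr_ge0 // real_normK ?num_real.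
by apply: le_trans; apply: ler_norm.
Qed.

Lemma dotDl u w v : dot (u + w) v = dot u v + dot w v.
Proof. by rewrite /dot -big_split; apply: eq_bigr => i _; rewrite mxE mulrDl. Qed.

Lemma vnormD u v : vnorm (u + v) <= vnorm u + vnorm v.
Proof.
have h0 := vnorm_ge0 u; have h1 := vnorm_ge0 v.
rewrite -ler_sqr ?nnegrE ?addr_ge0 ?vnorm_ge0 //.
rewrite vnorm_sq dotDl !(dotC _ (u + v)) !dotDl -!vnorm_sq (dotC v u).
have := dot_le u v; nra.
Qed.

Lemma vnormZ (a : R) v : vnorm (a *: v) = `|a| * vnorm v.
Proof.
rewrite !vnormE /dot.
have -> : \sum_(i < n) (a *: v) i 0 * (a *: v) i 0 = a ^+ 2 * \sum_(i < n) v i 0 * v i 0.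
  by rewrite mulr_sumr; apply: eq_bigr => i _; rewrite !mxE; ring.
by rewrite sqrtrM ?sqr_ge0 // sqrtr_sqr.
Qed.

Lemma vnormN v : vnorm (- v) = vnorm v.
Proof. by rewrite -scaleN1r vnormZ normrN normr1 mul1r. Qed.

Lemma coord_le v i : `|v i 0| <= vnorm v.
Proof.
rewrite vnormE -sqrtr_sqr; apply: ler_wsqrtr.
rewrite /dot (bigD1 i) //= -expr2 lerDl; apply: sumr_ge0 => j _; by rewrite -expr2 sqr_ge0.
Qed.

Lemma vnorm0_eq v : vnorm v = 0 -> v = 0.
Proof.
move=> h; apply/matrixP => i j; rewrite (ord1 j) mxE; apply/eqP.
by rewrite -normr_eq0 eq_le normr_ge0 andbT -h coord_le.
Qed.

Lemma vnorm0 : vnorm (0 : 'cV[R]_n) = 0.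
Proof. by rewrite /vnorm big1 ?sqrtr0 // => i _; rewrite mxE expr0n. Qed.
End V.

Section O.
Local Open Scope classical_set_scope.
Context {R : realType}.
Context {p q : nat}.
Variable M : 'M[R]_(p, q).

Lemma opnorm_ub : has_ubound [set vnorm (M *m v) | v in [set v : 'cV[R]_q | vnorm v <= 1]].
Proof.
exists (Num.sqrt (\sum_(i < p) (\sum_(j < q) `|M i j|) ^+ 2)).
move=> _ [v /= hv <-]; rewrite /vnorm; apply: ler_wsqrtr; apply: ler_sum => i _.
rewrite mxE -real_normK ?num_real //; apply: lerXn2r; rewrite ?nnegrE ?normr_ge0 ?sumr_ge0 //.
apply: le_trans; first exact: ler_norm_sum.
 apply: ler_sum => j _.
rewrite normrM -[X in _ <= X]mulr1 ler_wpM2l //.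
by apply: le_trans (coord_le v j) hv.
Qed.

Lemma opnorm_ge0 : 0 <= opnorm M.
Proof.
rewrite /opnorm -(@vnorm0 R p); apply: (ub_le_sup opnorm_ub).
exists 0; last by rewrite mulmx0.
by rewrite /= vnorm0.
Qed.

Lemma opnorm_le v : vnorm (M *m v) <= opnorm M * vnorm v.
Proof.
have [h0|hn] := eqVneq (vnorm v) 0.
  by rewrite h0 mulr0 (vnorm0_eq _ h0) mulmx0 vnorm0.
have hp : 0 < vnorm v by rewrite lt0r hn vnorm_ge0.
set w := (vnorm v)^-1 *: v.
have hw : vnorm w <= 1 by rewrite /w vnormZ ger0_norm ?invr_ge0 ?vnorm_ge0 // mulVf.
have h := ub_le_sup (opnorm_ub) (ex_intro2 _ _ w hw erefl).
move: h; rewrite /w -scalemxAr vnormZ ger0_norm ?invr_ge0 ?vnorm_ge0 // => h.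
by rewrite -ler_pdivrMr // mulrC.
Qed.
End O.

Lemma DC (R : realType) (d : nat) (m : 'I_d -> bool) (x : 'cV[R]_d) :
  Dmask R m *m x + Dcomask R m *m x = x.
Proof.
rewrite -mulmxDl.
have -> : Dmask R m + Dcomask R m = 1%:M.
  apply/matrixP => i j; rewrite !mxE -mulrnDl addrC subrK.
  by [].
by rewrite mul1mx.
Qed.

Theorem theorem3 (R : realType) (d k : nat) (hk1 : (1 <= k)%N) (hkd : (k <= d)%N)
  (A : 'M[R]_(d, k)) (hA : A^T *m A = 1%:M)
  (beta : R) (hb0 : 0 < beta) (hb1 : beta < 1)
  (delta : 'M[R]_d) (m : 'I_d -> bool)
  (hlam : opnorm ((A *m A^T + delta) *m Dmask R m) < 1)
  (x0 x1 : 'cV[R]_d) (hx0 : exists y : 'cV[R]_k, x0 = A *m y) :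
  let lam := opnorm ((A *m A^T + delta) *m Dmask R m) in
  let s := Num.sqrt (1 - beta) in
  let E := opnorm (theta_hat A beta delta - theta_star A beta) * vnorm x0
           / ((1 - lam) * s) in
  forall r : nat,
    vnorm (iterate A beta delta m x0 x1 r - x0)
    <= lam ^+ r * (opnorm (theta_star A beta) * vnorm (x1 - x0) / s + E) + E.
Proof.
move=> lam s E.
have s0 : 0 < s by rewrite /s sqrtr_gt0 subr_gt0.
have l0 : 0 <= lam by apply: opnorm_ge0.
have Px0 : A *m A^T *m x0 = x0.
  by case: hx0 => y ->; rewrite -!mulmxA (mulmxA A^T) hA mul1mx.
have hdiff : theta_hat A beta delta - theta_star A beta = s *: delta.
  by rewrite /theta_hat addrAC subrr add0r.
set N := opnorm (theta_hat A beta delta - theta_star A beta).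
have E0 : 0 <= E.
  by rewrite /E divr_ge0 ?mulr_ge0 ?opnorm_ge0 ?vnorm_ge0 // ?ltW // subr_gt0.
have b1 : vnorm (delta *m x0) <= (1 - lam) * E.
  have h := opnorm_le (theta_hat A beta delta - theta_star A beta) x0.
  rewrite -/N hdiff -scalemxAl vnormZ (ger0_norm (ltW s0)) in h.
  have -> : (1 - lam) * E = N * vnorm x0 / s.
    rewrite /E -/N. field. by rewrite gt_eqF // gt_eqF // subr_gt0.
  by rewrite ler_pdivlMr // mulrC.
set B := opnorm (theta_star A beta) * vnorm (x1 - x0) / s.
have b0 : vnorm (iterate A beta delta m x0 x1 0 - x0) <= B.
  rewrite /= -[X in _ - X]Px0 -mulmxBr.
  have h := opnorm_le (theta_star A beta) (x1 - x0).
  rewrite {1}/theta_star -scalemxAl vnormZ (ger0_norm (ltW s0)) in h.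
  by rewrite /B ler_pdivlMr // mulrC.
have hstep r : iterate A beta delta m x0 x1 r.+1 - x0
    = (A *m A^T + delta) *m Dmask R m *m (iterate A beta delta m x0 x1 r - x0) + delta *m x0.
  rewrite /= /theta_hat /theta_star -scalerDr -scalemxAl scalerA mulVf ?gt_eqF // scale1r.
  set it := iterate _ _ _ _ _ _ _.
  have -> : Dmask R m *m it + Dcomask R m *m x0 = Dmask R m *m (it - x0) + x0.
    have hC : Dcomask R m *m x0 = x0 - Dmask R m *m x0.
      by rewrite -[X in X - _](DC _ _ m x0) addrAC subrr add0r.
    by rewrite hC mulmxBr addrA addrAC.
  by rewrite mulmxDr mulmxA [in X in _ + X - _]mulmxDl Px0 (addrC x0) addrA addrK.
elim => [|r IH].
  by rewrite expr0 mul1r; apply: le_trans b0 _; lra.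
rewrite hstep; apply: le_trans (vnormD _ _) _.
apply: le_trans (lerD (opnorm_le _ _) b1) _.
rewrite -/lam exprS.
have := ler_wpM2l l0 IH; nra.
Qed.
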